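(* Let $\mathcal X$ be finite with $N=|\mathcal X|\ge2$, $0<c<1/N$ and $\varepsilon\ge0$. Then $$\eta_{\mathrm{TV}}(\varepsilon,c)=\sup_{K\in\mathcal M(\varepsilon,c)}\eta^{\mathcal Q_{\mathcal X}(c)}_{\mathrm{TV}}(K).$$
   Context: A kernel $K$ is a row-stochastic matrix with entries $K_{Y|X=x}(y)$, $(K\circ P_X)(y)=\sum_x K_{Y|X=x}(y)P_X(x)$. PML: $\ell_{K\times P_X}(X\to y)=\log\frac{\max_x K_{Y|X=x}(y)}{(K\circ P_X)(y)}$ for full-support $P_X$ and $(K\circ P_X)(y)>0$. $\mathcal Q_{\mathcal X}(c)=\{P_X\in\mathcal P(\mathcal X):\min_x P_X(x)\ge c\}$; $C(K,\mathcal P)=\sup_{P_X\in\mathcal P}\sup_{y:(K\circ P_X)(y)>0}\ell_{K\times P_X}(X\to y)$; $\mathcal M(\varepsilon,c)$ is the set of kernels from $\mathcal X$ to any finite output set with $C(K,\mathcal Q_{\mathcal X}(c))\le\varepsilon$. For a set $\mathcal P\subseteq\mathcal P(\mathcal X)$, $\eta^{\mathcal P}_{\mathrm{TV}}(K)=\sup_{P_X,Q_X\in\mathcal P,\,P_X\ne Q_X}\frac{\mathrm{TV}(K\circ P_X\|K\circ Q_X)}{\mathrm{TV}(P_X\|Q_X)}$, and $\eta_{\mathrm{TV}}(K)=\eta^{\mathcal P(\mathcal X)}_{\mathrm{TV}}(K)$, where $\mathrm{TV}(P\|Q)=\frac12\sum|P-Q|$. Finally $\eta_{\mathrm{TV}}(\varepsilon,c)=\sup_{K\in\mathcal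 M(\varepsilon,c)}\eta_{\mathrm{TV}}(K)$. *)

(* Defs.v *)
From HB Require Import structures.
From mathcomp Require Import all_boot all_order all_algebra.
From mathcomp Require Import classical_sets reals exp.
Set Implicit Arguments. Unset Strict Implicit. Unset Printing Implicit Defensive.
Import Order.TTheory GRing.Theory Num.Theory.
Local Open Scope ring_scope.
Local Open Scope classical_set_scope.

Section Defs.
Variable R : realType.

Definition is_prob (X : finType) (P : X -> R) : Prop :=
  (forall x, 0 <= P x) /\ \sum_(x : X) P x = 1.

(* a kernel (row-stochastic matrix) K x y = K_{Y|X=x}(y) *)
Definition is_kernel (X Y : finType) (K : X -> Y -> R) : Prop :=
  forall x, is_prob (K x).

Definition push (X Y : finType) (K : X -> Y -> R) (P : X -> R) (y : Y) : R :=
  \sum_(x : X) K x y * P x.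

Definition TV (X : finType) (P Q : X -> R) : R :=
  2^-1 * \sum_(x : X) `|P x - Q x|.

Definition PML (X Y : finType) (K : X -> Y -> R) (P : X -> R) (y : Y) : R :=
  ln ((\big[Num.max/0]_(x : X) K x y) / push K P y).

Definition Qset (X : finType) (c : R) : set (X -> R) :=
  [set P | is_prob P /\ forall x, c <= P x].

Definition probs (X : finType) : set (X -> R) := [set P | is_prob P].

Definition Cap (X Y : finType) (K : X -> Y -> R) (Ps : set (X -> R)) : R :=
  sup [set l | exists P, Ps P /\ exists y, 0 < push K P y /\ l = PML K P y].

Definition inM (X Y : finType) (K : X -> Y -> R) (eps c : R) : Prop :=
  is_kernel K /\ Cap K (@Qset X c) <= eps.

Definition eta_TV_on (X Y : finType) (K : X -> Y -> R) (Ps : set (X -> R)) : R :=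
  sup [set r | exists P Q, Ps P /\ Ps Q /\ P <> Q /\
                 r = TV (push K P) (push K Q) / TV P Q].

Definition eta_TV (X Y : finType) (K : X -> Y -> R) : R := eta_TV_on K (@probs X).

Definition eta_TV_ec (X : finType) (eps c : R) : R :=
  sup [set r | exists (Y : finType) (K : X -> Y -> R), inM K eps c /\ r = eta_TV K].

End Defs.

(* Main.v *)
Require Import Defs.
From mathcomp Require Import all_boot all_order all_algebra.
From mathcomp Require Import boolp classical_sets reals exp.
Import Order.TTheory GRing.Theory Num.Theory.
Local Open Scope ring_scope.
Local Open Scope classical_set_scope.

Lemma TV_scale (R : realType) (X : finType) (f g f' g' : X -> R) (t : R) :
  0 < t -> (forall x, f' x - g' x = t * (f x - g x)) ->
  TV f' g' = t * TV f g.
Proof.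
move=> t0 H; rewrite /TV mulrCA; congr (_ * _).
rewrite mulr_sumr; apply: eq_bigr => x _.
by rewrite H normrM gtr0_norm.
Qed.

Lemma eta_eq (R : realType) (X Y : finType) (K : X -> Y -> R) (c : R) :
  0 < c -> c * #|X|%:R < 1 -> eta_TV K = eta_TV_on K (@Qset R X c).
Proof.
move=> c0 cN; rewrite /eta_TV /eta_TV_on; congr sup; apply/seteqP; split => r /=.
- move=> [P [Q [[P0 P1] [[Q0 Q1] [PQ ->]]]]].
  set t := 1 - c * #|X|%:R.
  have t0 : 0 < t by rewrite /t subr_gt0.
  have sumE' (F : X -> R) : \sum_(x : X) (c + t * F x) = c * #|X|%:R + t * \sum_(x : X) F x.
    by rewrite big_split /= -mulr_sumr sumr_const mulr_natr.
  exists (fun x => c + t * P x), (fun x => c + t * Q x).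
  have QF (F : X -> R) : (forall x, 0 <= F x) -> \sum_(x : X) F x = 1 ->
      Qset c (fun x => c + t * F x).
    move=> F0 F1; split; [split|].
    + by move=> x; apply: addr_ge0; [exact: ltW | apply: mulr_ge0; [exact: ltW | exact: F0]].
    + by rewrite sumE' F1 mulr1 /t addrC subrK.
    + by move=> x; rewrite lerDl; apply: mulr_ge0; [exact: ltW | exact: F0].
  split; first exact: QF.
  split; first exact: QF.
  split.
    move=> E; apply: PQ; apply/funext => x.
    have := congr1 (fun h => h x) E => /= /addrI /mulfI; apply.
    by rewrite gt_eqF.
  rewrite (@TV_scale _ _ P Q (fun x => c + t * P x) (fun x => c + t * Q x) t) //; last first.
    by move=> x /=; rewrite opprD addrACA subrr add0r mulrBr.
  rewrite (@TV_scale _ _ (push K P) (push K Q) (push K (fun x => c + t * P x)) (push K (fun x => c + t * Q x)) t) //; last first.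
    move=> y; rewrite /push -!sumrB mulr_sumr; apply: eq_bigr => x _.
    by rewrite -!mulrBr opprD addrACA subrr add0r -mulrBr mulrCA.
  move: (TV _ _) (TV _ _) => A B.
  by rewrite -mulf_div mulfV ?mul1r // gt_eqF.
- move=> [P [Q [[HP _] [[HQ _] [PQ ->]]]]]; by exists P, Q.
Qed.

Theorem lemma2 (R : realType) (X : finType) (eps c : R) :
  (2 <= #|X|)%N -> 0 < c -> c < (#|X|%:R)^-1 -> 0 <= eps ->
  eta_TV_ec X eps c =
  sup [set r | exists (Y : finType) (K : X -> Y -> R),
                 inM K eps c /\ r = eta_TV_on K (@Qset R X c)].
Proof.
move=> N2 c0 cN _.
have N0 : 0 < (#|X|%:R : R) by rewrite ltr0n; apply: leq_trans N2.
have cN' : c * #|X|%:R < 1 by rewrite -ltr_pdivlMr // div1r.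
rewrite /eta_TV_ec; congr sup; apply/seteqP; split => r /= [Y [K [HK ->]]];
  exists Y, K; split => //; by rewrite (@eta_eq R X Y K c c0 cN').
Qed.
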